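(* Let $1<n\leq m$ and let $v\in Z_{n,m}$ with $h(v)<h_{n,m}$. Then $d(v,0)\leq d(u^{(0)},0)\leq D_{n,m}$.
   Context: Elements of $\mathbb{Z}_n$ are identified with representatives in $\{0,\dots,n-1\}$ (so $v_0,v_{m+1}$ are such integers in sums). $Z_{n,m}$ has vertices $u=(u_0,\dots,u_{m+1})\in\mathbb{Z}_n\times\{-1,0,1\}^m\times\mathbb{Z}_n$ with $\sum u_i\equiv0\pmod n$; $u,v$ adjacent if there is $0\leq i\leq m$ with $u_j=v_j$ for $j\notin\{i,i+1\}$ and either ($u_i=v_i+1$, $u_{i+1}=v_{i+1}-1$) or ($u_i=v_i-1$, $u_{i+1}=v_{i+1}+1$), arithmetic in coordinates $0,m+1$ in $\mathbb{Z}_n$. $d$ is graph distance, $0$ the all-zero vertex. $\operatorname{Piv}(v)$ is the set of integers $-1\le p\le m+1$ with $n\mid\sum_{i=0}^pv_i$ (empty sum $0$). $h(v)=\min\{|p-\frac m2|:p\in\operatorname{Piv}(v)\}$. $h_{n,m}=\frac n2$ if $2\mid(m-n)$ and $\frac{n+1}{2}$ otherwise. $u^{(0)}$ is the vertex with $u_i=1$ ($1\le i\le m$), $u_0\equiv-\lfloor\frac{m-n}2\rfloor\pmod n$; for $n<m$, $m-n$ odd, $u^{(1)}$ is the vertex with $u_{\lceil(m+1)/2\rceil}=0$, other $u_i=1$ ($1\le i\le m$), $u_0\equiv-\lfloor\frac{m-n}2\rfloor\pmod n$. $D_{n,m}=d(u^{(0)},0)$ if $2\mid(m-n)$ and $D_{n,m}=\max\{d(u^{(0)},0),d(u^{(1)},0)\}$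 otherwise. *)

(* Defs.v *)
From Stdlib Require Import ClassicalEpsilon.
From mathcomp Require Import all_boot all_order all_algebra.
Set Implicit Arguments. Unset Strict Implicit. Unset Printing Implicit Defensive.
Import Order.TTheory GRing.Theory Num.Theory.
Local Open Scope ring_scope.

(* A vertex u = (u_0,...,u_{m+1}) of Z_{n,m} is represented as a sequence of
   m+2 integers; u_0 and u_{m+1} are the representatives in {0,...,n-1}. *)
Definition is_vertex (n m : nat) (u : seq int) : Prop :=
  [/\ size u = m.+2,
      0 <= u`_0 < n%:Z, 0 <= u`_m.+1 < n%:Z,
      (forall i : nat, (1 <= i <= m)%N -> u`_i \in [:: -1; 0; 1]) &
      (n%:Z %| \sum_(i < m.+2) u`_i)%Z].

Definition eq_coord (n m j : nat) (a b : int) : Prop :=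
  if (j == 0%N) || (j == m.+1) then (a %% n%:Z = b %% n%:Z)%Z else a = b.

Definition adj (n m : nat) (u v : seq int) : Prop :=
  exists i : nat, (i <= m)%N /\
    (forall j : nat, (j < m.+2)%N -> j != i -> j != i.+1 -> u`_j = v`_j) /\
    ((eq_coord n m i u`_i (v`_i + 1) /\ eq_coord n m i.+1 u`_i.+1 (v`_i.+1 - 1))
     \/ (eq_coord n m i u`_i (v`_i - 1) /\ eq_coord n m i.+1 u`_i.+1 (v`_i.+1 + 1))).

Definition dist_le (n m : nat) (u v : seq int) (k : nat) : Prop :=
  exists p : seq (seq int),
    [/\ (size p <= k)%N,
        (forall w, w \in p -> is_vertex n m w),
        (forall i : nat, (i < size p)%N -> adj n m (nth u (u :: p) i) (nth u p i)) &
        last u p = v].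

Definition dist_leb (n m : nat) (u v : seq int) (k : nat) : bool :=
  if excluded_middle_informative (dist_le n m u v k) then true else false.

(* graph distance d(u,v) (the least k with a walk of length k; 0 by
   convention if no walk exists, which does not happen in Z_{n,m}) *)
Definition dist (n m : nat) (u v : seq int) : nat :=
  match excluded_middle_informative (exists k, dist_leb n m u v k) with
  | left H => ex_minn H
  | right _ => 0%N
  end.

Definition zero_vertex (m : nat) : seq int := nseq m.+2 0.

(* Piv(v) = { -1 <= p <= m+1 : n | sum_{i=0}^p v_i } *)
Definition Piv (n m : nat) (v : seq int) : seq int :=
  [seq (q%:Z - 1) | q <- iota 0 m.+3 & (n%:Z %| \sum_(i < q) v`_i)%Z].

(* h(v) = min { |p - m/2| : p in Piv(v) } ; -1 always lies in Piv(v), so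
   using |-1 - m/2| as the seed of the fold does not change the minimum *)
Definition hv (n m : nat) (v : seq int) : rat :=
  \big[Num.min/ `|(-1)%:~R - m%:R / 2|]_(p <- Piv n m v) `|p%:~R - m%:R / 2|.

Definition hnm (n m : nat) : rat :=
  if ~~ odd (m - n) then n%:R / 2 else (n%:R + 1) / 2.

Definition u0 (n m : nat) : seq int :=
  let a := ((- ((m - n)./2)%:Z) %% n%:Z)%Z in
  a :: nseq m 1 ++ [:: ((- (a + m%:Z)) %% n%:Z)%Z].

Definition u1 (n m : nat) : seq int :=
  let a := ((- ((m - n)./2)%:Z) %% n%:Z)%Z in
  let c := ((m.+2)./2)%N in
  a :: [seq (if i == c then 0 else 1) | i <- iota 1 m]
    ++ [:: ((- (a + (m%:Z - 1))) %% n%:Z)%Z].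

Definition Dnm (n m : nat) : nat :=
  if ~~ odd (m - n) then dist n m (u0 n m) (zero_vertex m)
  else maxn (dist n m (u0 n m) (zero_vertex m)) (dist n m (u1 n m) (zero_vertex m)).

(* Main.v *)
Require Import Defs.
From mathcomp Require Import all_boot all_order all_algebra.
Import Order.TTheory GRing.Theory Num.Theory.
Local Open Scope ring_scope.
From Stdlib Require Import ClassicalEpsilon.
From mathcomp Require Import zify lra.
Set Implicit Arguments. Unset Strict Implicit.

Definition T (v : seq int) (p : nat) : int := \sum_(j < p.+1) v`_j.
Definition G (m : nat) (v : seq int) (c : int) : int := \sum_(p < m.+1) `|T v p - c|.
Definition B (m : nat) (q : int) : int := \sum_(p < m.+1) `|p%:Z - q|.

Lemma T0 v : T v 0 = v`_0.
Proof. by rewrite /T big_ord1. Qed.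

Lemma TS v p : T v p.+1 = T v p + v`_p.+1.
Proof. by rewrite /T big_ord_recr. Qed.

Lemma sumdiff (m i : nat) (u v : seq int) p :
  (forall j, (j < m.+2)%N -> j != i -> j != i.+1 -> u`_j = v`_j) ->
  (p <= m.+1)%N ->
  T v p - T u p = (if (i <= p)%N then v`_i - u`_i else 0)
                + (if (i.+1 <= p)%N then v`_i.+1 - u`_i.+1 else 0).
Proof.
move=> Hag; elim: p => [|p IH] Hp.
  rewrite !T0; case: i Hag => [|i] Hag /=; first by rewrite addr0.
  rewrite Hag //. rewrite subrr. by rewrite addr0.
rewrite !TS; have {IH} IH := IH (ltnW Hp).
have [e1|n1] := eqVneq p.+1 i.
  subst i; move: IH; repeat case: ifP; lia.
have [e2|n2] := eqVneq p.+1 i.+1.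
  case: e2 => e2; subst i; move: IH; repeat case: ifP; lia.
rewrite Hag //.
move: IH; repeat case: ifP; lia.
Qed.

Lemma modeq_ex (n : nat) (a b : int) : (a %% n%:Z = b %% n%:Z)%Z ->
  exists e : int, b = a + e * n%:Z.
Proof.
move=> H; exists ((b %/ n%:Z)%Z - (a %/ n%:Z)%Z).
have := divz_eq a n%:Z; have := divz_eq b n%:Z. rewrite H. move=> h1 h2.
rewrite mulrBl. lia.
Qed.

Lemma adj_data n m x y : adj n m x y ->
  exists i (d e : int), (i <= m)%N /\
    (forall j, (j < m.+2)%N -> j != i -> j != i.+1 -> x`_j = y`_j) /\
    [/\ `|d| = 1, y`_i = x`_i + d + e * n%:Z, (i != 0%N -> e = 0) &
    ((i.+1 <= m)%N -> y`_i.+1 = x`_i.+1 - d)].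
Proof.
case=> i [Hi [Hag H]]; exists i.
have cz : (i.+1 <= m)%N -> (i.+1 == 0%N) || (i.+1 == m.+1) = false.
  by move=> h; apply/negbTE; rewrite negb_or /= eqSS; apply/eqP => E; move: h; rewrite E ltnn.
case: H => [[H1 H2]|[H1 H2]]; [exists (-1) | exists 1];
  move: H1 H2; rewrite /eq_coord.
- case: ifP => hi.
  + move=> /modeq_ex [e he] h2; exists e; split => //; split => //; split.
    * by [].
    * lia.
    * move=> /negbTE hi0; move: hi; rewrite hi0 /= => /eqP; lia.
    * by move=> /cz; move: h2 => /[swap] ->; lia.
  + move=> h1 h2; exists 0; split => //; split => //; split; try lia.
    by move=> /cz; move: h2 => /[swap] ->; lia.
- case: ifP => hi.
  + move=> /modeq_ex [e he] h2; exists e; split => //; split => //; split.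
    * by [].
    * lia.
    * move=> /negbTE hi0; move: hi; rewrite hi0 /= => /eqP; lia.
    * by move=> /cz; move: h2 => /[swap] ->; lia.
  + move=> h1 h2; exists 0; split => //; split => //; split; try lia.
    by move=> /cz; move: h2 => /[swap] ->; lia.
Qed.

Lemma sum_ind (m i : nat) : (i <= m)%N ->
  \sum_(p < m.+1) ((if (p : nat) == i then 1 else 0) : int) = 1.
Proof.
move=> Hi; have Hi' : (i < m.+1)%N by [].
rewrite (bigD1 (Ordinal Hi')) //= eqxx big1 ?addr0 //.
move=> j hj; case: eqP => // E; move: hj; suff -> : j = Ordinal Hi' by rewrite eqxx.
by apply: val_inj.
Qed.

Lemma adj_step n m x y c : adj n m x y -> (n%:Z %| c)%Z ->
  exists c', (n%:Z %| c')%Z /\ G m x c' <= G m y c + 1.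
Proof.
case/adj_data=> i [d [e [Hi [Hag [Hd Hyi He Hyi1]]]]] Hc.
exists (c - e * n%:Z); split; first by apply: rpredB => //; apply: dvdz_mull.
rewrite /G -(@sum_ind m i Hi) -big_split /=; apply: ler_sum => p _.
have Hp : (p <= m.+1)%N by have := ltn_ord p; lia.
have := @sumdiff m i x y p Hag Hp; rewrite Hyi.
have Hpm : (p <= m)%N by have := ltn_ord p; lia.
case: (leqP i.+1 p) => h1.
  rewrite Hyi1; last by lia.
  have -> : (i <= p)%N by lia.
  have /negbTE -> : (p : nat) != i by apply/eqP; lia.
  move: (e * n%:Z) => k; lia.
case: (leqP i p) => h2.
  have -> : (p : nat) == i by apply/eqP; lia.
  move: (e * n%:Z) => k; lia.
have /negbTE -> : (p : nat) != i by apply/eqP; lia.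
rewrite He; last by apply/eqP; lia.
lia.
Qed.

Lemma walk_lb n m (p : seq (seq int)) : forall x L,
  (forall i, (i < size p)%N -> adj n m (nth x (x :: p) i) (nth x p i)) ->
  (forall c, (n%:Z %| c)%Z -> L <= G m x c) ->
  forall c, (n%:Z %| c)%Z -> L - (size p)%:Z <= G m (last x p) c.
Proof.
elim: p => [|y p IH] x L Hadj HL c Hc /=; first by rewrite subr0; apply: HL.
have Hxy : adj n m x y by apply: (Hadj 0%N).
have H1 : forall c, (n%:Z %| c)%Z -> L - 1 <= G m y c.
  move=> c0 Hc0; have [c' [Hc' Hle]] := adj_step Hxy Hc0.
  have := HL c' Hc'; lia.
have := IH y (L - 1) _ H1 c Hc.
have -> : (size p).+1%:Z = 1 + (size p)%:Z by lia.
rewrite opprD addrA; apply.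
move=> i Hi; have := Hadj i.+1 Hi; rewrite /=.
rewrite (@set_nth_default _ (y :: p) y x i) ?(@set_nth_default _ p y x i) //=; exact: ltnW.
Qed.

Lemma G_zero m : G m (zero_vertex m) 0 = 0.
Proof.
rewrite /G big1 // => p _; rewrite /T big1 ?subrr ?normr0 // => j _.
by rewrite /zero_vertex nth_nseq; case: ifP.
Qed.

Lemma dist_lebP n m u v k : dist_leb n m u v k <-> dist_le n m u v k.
Proof. by rewrite /dist_leb; case: excluded_middle_informative. Qed.

Lemma dist_min n m u v k : dist_le n m u v k -> (dist n m u v <= k)%N.
Proof.
move=> H; rewrite /dist; case: excluded_middle_informative => [E|E].
  by case: ex_minnP => k0 _ Hm; apply: Hm; apply/dist_lebP.
by exfalso; apply: E; exists k; apply/dist_lebP.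
Qed.

Lemma dist_spec n m u v k : dist_le n m u v k -> dist_le n m u v (dist n m u v).
Proof.
move=> H; rewrite /dist; case: excluded_middle_informative => [E|E].
  by case: ex_minnP => k0 /dist_lebP.
by exfalso; apply: E; exists k; apply/dist_lebP.
Qed.

Lemma dist_lower n m u L k : dist_le n m u (zero_vertex m) k ->
  (forall c, (n%:Z %| c)%Z -> L <= G m u c) -> L <= k%:Z.
Proof.
case=> p [Hs _ Hadj Hl] HL.
have := walk_lb Hadj HL (dvdz0 _); rewrite Hl G_zero.
move: Hs; lia.
Qed.

Lemma mem3 (x : int) : (x \in [:: -1; 0; 1]) = (-1 <= x <= 1).
Proof. rewrite !inE; lia. Qed.

Lemma mod_dvd (n : nat) (a : int) : (n%:Z %| (a %% n%:Z)%Z - a)%Z.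
Proof.
have := divz_eq a n%:Z => h.
have -> : (a %% n%:Z)%Z - a = - ((a %/ n%:Z)%Z * n%:Z) by rewrite {2}h; lia.
by rewrite rpredN; apply: dvdz_mull.
Qed.

Lemma mod_range (n : nat) (a : int) : (0 < n)%N -> 0 <= (a %% n%:Z)%Z < n%:Z.
Proof.
move=> hn; rewrite modz_ge0 ?ltz_pmod //; lia.
Qed.

Lemma move_ex n m (v : seq int) i (d : int) : (0 < n)%N -> (i <= m)%N ->
  size v = m.+2 ->
  exists w (e e1 : int),
   [/\ size w = m.+2,
    (forall j, (j < m.+2)%N -> j != i -> j != i.+1 -> v`_j = w`_j),
    w`_i = v`_i + d + e, w`_i.+1 = v`_i.+1 - d + e1 &
    [/\ (n%:Z %| e)%Z, (i != 0%N -> e = 0), (n%:Z %| e1)%Z, (i.+1 != m.+1 -> e1 = 0) &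
     (i == 0%N -> 0 <= w`_0 < n%:Z) /\ (i.+1 == m.+1 -> 0 <= w`_m.+1 < n%:Z)]].
Proof.
move=> hn Hi Hs.
pose wi := if i == 0%N then ((v`_0 + d) %% n%:Z)%Z else v`_i + d.
pose wi1 := if i.+1 == m.+1 then ((v`_m.+1 - d) %% n%:Z)%Z else v`_i.+1 - d.
exists (set_nth 0 (set_nth 0 v i wi) i.+1 wi1), (wi - v`_i - d), (wi1 - v`_i.+1 + d).
have nthw : forall j, (set_nth 0 (set_nth 0 v i wi) i.+1 wi1)`_j =
   if j == i.+1 then wi1 else if j == i then wi else v`_j.
  by move=> j; rewrite nth_set_nth /= nth_set_nth.
split.
- rewrite !size_set_nth Hs; lia.
- by move=> j _ h1 h2; rewrite nthw (negbTE h1) (negbTE h2).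
- rewrite nthw (_ : (i == i.+1) = false) ?eqxx; [lia | by elim: i {Hi wi wi1 nthw}].
- rewrite nthw eqxx; lia.
split.
- rewrite /wi; case: ifP => [/eqP ->|_]; last by rewrite (_ : v`_i + d - v`_i - d = 0) ?dvdz0 //; lia.
  have -> : ((v`_0 + d) %% n%:Z)%Z - v`_0 - d = ((v`_0 + d) %% n%:Z)%Z - (v`_0 + d) by lia.
  exact: mod_dvd.
- by rewrite /wi => /negbTE ->; lia.
- rewrite /wi1; case: ifP => [/eqP [->]|_]; last by rewrite (_ : v`_i.+1 - d - v`_i.+1 + d = 0) ?dvdz0 //; lia.
  have -> : ((v`_m.+1 - d) %% n%:Z)%Z - v`_m.+1 + d = ((v`_m.+1 - d) %% n%:Z)%Z - (v`_m.+1 - d) by lia.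
  exact: mod_dvd.
- by rewrite /wi1 => /negbTE ->; lia.
split.
- move=> /eqP i0; rewrite nthw /wi i0 /=; exact: mod_range.
- move=> /eqP [im]; rewrite nthw /wi1 im !eqxx; exact: mod_range.
Qed.

Lemma eq_coord_lem n m j (a b : int) : (n%:Z %| a - b)%Z ->
  (~~ ((j == 0%N) || (j == m.+1)) -> a = b) -> eq_coord n m j a b.
Proof.
rewrite /eq_coord; case: ifP => _ h1 h2; last exact: h2.
by apply/eqP; rewrite eqz_mod_dvd.
Qed.

Lemma dist_cons n m v w z N : adj n m v w -> is_vertex n m w ->
  dist_le n m w z N -> dist_le n m v z N.+1.
Proof.
move=> Hadj Hw [p [Hs Hp Ha Hl]]; exists (w :: p); split => //=.
- move=> x; rewrite inE => /orP [/eqP ->|]; [exact: Hw | exact: Hp].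
- case=> [|i] //= Hi; have := Ha i Hi.
  by rewrite (@set_nth_default _ (w :: p) w v i) ?(@set_nth_default _ p w v i) //=; exact: ltnW.
Qed.

Lemma T_lip (v : seq int) (p q : nat) :
  (forall j, (1 <= j <= q)%N -> -1 <= v`_j <= 1) -> (p <= q)%N ->
  `|T v q - T v p| <= (q - p)%:Z.
Proof.
move=> Hv; elim: q Hv => [|q IH] Hv Hpq.
  have -> : p = 0%N by lia.
  by rewrite subrr normr0.
case: (leqP p q) => h.
  have H1 : `|T v q - T v p| <= (q - p)%:Z by apply: IH => // j hj; apply: Hv; lia.
  have H2 := Hv q.+1 (_ : (1 <= q.+1 <= q.+1)%N). rewrite leqnn in H2.
  rewrite TS; move: H1 (H2 erefl); lia.
have -> : p = q.+1 by lia.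
by rewrite subrr normr0 subnn.
Qed.

Lemma dvd_small (n : nat) (c : int) : (n%:Z %| c)%Z -> 0 <= c < n%:Z -> c = 0.
Proof.
case/dvdzP=> k -> /andP [h1 h2].
have [k0|[k1|k2]] : k = 0 \/ 1 <= k \/ k <= -1 by lia.
- by rewrite k0 mul0r.
- have : 1 * n%:Z <= k * n%:Z by rewrite ler_pM2r ?k1 //; lia.
  lia.
- have : k * n%:Z <= -1 * n%:Z by rewrite ler_pM2r ?k2 //; lia.
  lia.
Qed.

Lemma zero_base n m v c : (0 < n)%N -> is_vertex n m v -> (n%:Z %| c)%Z ->
  G m v c = 0 -> v = zero_vertex m.
Proof.
move=> hn [Hs H0 Hm Hmid Hsum] Hc HG.
have Hz : forall p, (p <= m)%N -> T v p = c.
  move=> p hp; have := psumr_eq0P (fun (j : 'I_m.+1) _ => normr_ge0 (T v j - c)) HG.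
  move=> /(_ (Ordinal (hp : (p < m.+1)%N)) isT) /= /eqP; rewrite normr_eq0 subr_eq0.
  by move/eqP.
have c0 : c = 0 by apply: (dvd_small Hc); rewrite -(Hz 0%N) // T0.
have vm1 : v`_m.+1 = 0.
  apply: (dvd_small (n := n)) => //.
  have -> : v`_m.+1 = T v m.+1 by rewrite TS Hz // c0 add0r.
  exact: Hsum.
apply: (@eq_from_nth _ 0); first by rewrite Hs size_nseq.
move=> j; rewrite Hs => hj; rewrite nth_nseq hj.
case: j hj => [|j] hj; first by rewrite -T0 Hz.
case: (ltngtP j m) => hjm.
- have := TS v j; rewrite !Hz; lia.
- lia.
- by rewrite hjm.
Qed.

Lemma arith_mid1 (a b c d vi : int) :
  (c < b /\ d = -1) \/ (b < c /\ d = 1) -> -1 <= vi <= 1 ->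
  `|a - c| <= `|b - c| -> b = a + vi -> -1 <= vi + d <= 1.
Proof. lia. Qed.

Lemma arith_mid2 (a b c d vi : int) :
  (c < b /\ d = -1) \/ (b < c /\ d = 1) -> -1 <= vi <= 1 ->
  `|a - c| <= `|b - c| -> a = b + vi -> -1 <= vi - d <= 1.
Proof. lia. Qed.

Lemma L1 (a e : int) : a - (a + -1 + e + 1) = - e. Proof. lia. Qed.
Lemma L2 (a e : int) : a - (a - -1 + e - 1) = - e. Proof. lia. Qed.
Lemma L3 (a e : int) : a - (a + 1 + e - 1) = - e. Proof. lia. Qed.
Lemma L4 (a e : int) : a - (a - 1 + e + 1) = - e. Proof. lia. Qed.
Lemma L5 (a : int) : a = a + -1 + 0 + 1. Proof. lia. Qed.
Lemma L6 (a : int) : a = a - -1 + 0 - 1. Proof. lia. Qed.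
Lemma L7 (a : int) : a = a + 1 + 0 - 1. Proof. lia. Qed.
Lemma L8 (a : int) : a = a - 1 + 0 + 1. Proof. lia. Qed.

Lemma upper n m : (1 < n)%N -> forall N v c, is_vertex n m v -> (n%:Z %| c)%Z ->
  G m v c = N%:Z -> dist_le n m v (zero_vertex m) N.
Proof.
move=> hn; elim=> [|N IH] v c Hv Hc HG.
  have -> := zero_base (ltnW hn) Hv Hc HG.
  by exists [::]; split.
have [Hs H0 Hm Hmid Hsum] := Hv.
pose f := fun j : 'I_m.+1 => `|T v j - c|%N.
have [i _ Hmax] := arg_maxnP f (i0 := ord0) (P := xpredT) isT.
have Hmx : forall j : nat, (j <= m)%N -> `|T v j - c| <= `|T v i - c|.
  move=> j hj; have := Hmax (Ordinal (hj : (j < m.+1)%N)) isT; rewrite /f /=; lia.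
have Hne : T v i != c.
  apply/eqP => E; move: HG; rewrite /G big1; first by lia.
  move=> j _; have := Hmx j (ltn_ord j); rewrite E subrr normr0; lia.
pose d : int := if c < T v i then -1 else 1.
have Hd : (c < T v i /\ d = -1) \/ (T v i < c /\ d = 1).
  rewrite /d; case: ifP => h; [left | right]; split => //; lia.
clearbody d.
have Hi : (i <= m)%N by have := ltn_ord i; lia.
clear Hmax f; move: (nat_of_ord i) Hi Hmx Hne Hd => {}i Hi Hmx Hne Hd.
have [w [e [e1 [Hws Hag Hwi Hwi1 [He He0 He1 He10 [Hw0 Hwm]]]]]] :=
  move_ex d (ltnW hn) Hi Hs.
have Tw : forall p, (p <= m.+1)%N -> T w p = T v p +
   (if (i <= p)%N then d + e else 0) + (if (i.+1 <= p)%N then - d + e1 else 0).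
  move=> p hp; have := sumdiff Hag hp; rewrite Hwi Hwi1; case: (leqP i p) => ?; case: (ltnP i p) => ?; lia.
have HGw : G m w (c + e) = N%:Z.
  have -> : N%:Z = G m v c - 1 by lia.
  rewrite /G -(@sum_ind m i Hi) -sumrB; apply: eq_bigr => p _.
  have hp : (p <= m)%N by have := ltn_ord p; lia.
  rewrite Tw; last by lia.
  have Htvi : T v i - c != 0 by rewrite subr_eq0.
  case: (ltngtP p i) => hpi.
  - rewrite He0; last by apply/eqP; lia.
    by rewrite /= ?addr0 ?subr0 ?oppr0 ?addr0.
  - rewrite He10; last by apply/eqP; lia.
    rewrite /= ?addr0 ?subr0; congr `|_|; lia.
  - rewrite /= hpi addr0; move: (T v i) Htvi Hd => ti; lia.
have Hw : is_vertex n m w.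
  split => //.
  - case: (boolP (i == 0%N)) => [/Hw0 //|i0]; rewrite -Hag //; lia.
  - case: (boolP (i.+1 == m.+1)) => [/Hwm //|i0]; rewrite -Hag //; try lia.
  - move=> j hj; rewrite mem3.
    case: (eqVneq j i) => [ji|nji].
      subst j; rewrite Hwi He0; last by apply/eqP; lia.
      have := Hmid i hj; rewrite mem3 => hvi.
      have Hm1 : `|T v i.-1 - c| <= `|T v i - c| by apply: Hmx; lia.
      have := TS v i.-1; rewrite prednK; last by lia.
      move=> hT; rewrite addr0; exact: arith_mid1 Hd hvi Hm1 hT.
    case: (eqVneq j i.+1) => [ji|nji1].
      subst j; rewrite Hwi1 He10; last by apply/eqP; lia.
      have := Hmid i.+1 hj; rewrite mem3 => hvi.
      have Hm1 : `|T v i.+1 - c| <= `|T v i - c| by apply: Hmx; lia.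
      have := TS v i.
      move=> hT; rewrite addr0; exact: arith_mid2 Hd hvi Hm1 hT.
    rewrite -Hag //; [rewrite -mem3; exact: Hmid | lia].
  - have -> : \sum_(j < m.+2) w`_j = T w m.+1 by [].
    rewrite Tw // (leqW Hi) ltnS Hi.
    rewrite -addrA; apply: rpredD; first exact: Hsum.
    have -> : d + e + (- d + e1) = e + e1 by rewrite addrCA !addrA addNr add0r.
    exact: rpredD.
apply: (dist_cons _ Hw (IH w (c + e) Hw (rpredD Hc He) HGw)).
exists i; split => //; split => //.
case: Hd => [[_ dE]|[_ dE]]; rewrite Hwi Hwi1 dE; [left|right]; split; apply: eq_coord_lem.
- by rewrite L1 rpredN.
- move=> h; rewrite He0; first by rewrite -L5.
  by apply/eqP => E; move: h; rewrite E.
- by rewrite L2 rpredN.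
- move=> h; rewrite He10; first by rewrite -L6.
  by apply/eqP => E; move: h; rewrite E eqxx orbT.
- by rewrite L3 rpredN.
- move=> h; rewrite He0; first by rewrite -L7.
  by apply/eqP => E; move: h; rewrite E.
- by rewrite L4 rpredN.
- move=> h; rewrite He10; first by rewrite -L8.
  by apply/eqP => E; move: h; rewrite E eqxx orbT.
Qed.

Lemma bigmin_lt (s : seq int) (F : int -> rat) x y :
  \big[Num.min/x]_(p <- s) F p < y -> x < y \/ exists2 p, p \in s & F p < y.
Proof.
elim: s => [|a s IH]; rewrite ?big_nil ?big_cons; first by left.
rewrite gt_min => /orP [h|/IH [h|[p hp hF]]].
- by right; exists a; rewrite ?inE ?eqxx.
- by left.
- by right; exists p; rewrite ?inE ?hp ?orbT.
Qed.

Lemma hnmE n m : hnm n m = ((n + odd (m - n))%:R) / 2 :> rat.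
Proof. by rewrite /hnm; case: odd => /=; rewrite ?addn0 // natrD. Qed.

Lemma rat_to_int (p : int) (m N : nat) :
  `|p%:~R - m%:R / 2| < N%:R / 2 :> rat -> `|2 * p - m%:Z| < N%:Z.
Proof.
rewrite ltr_norml => /andP [h1 h2].
have hN : (N%:Z)%:~R = N%:R :> rat by [].
have hm : (m%:Z)%:~R = m%:R :> rat by [].
have h2' : (2%:Z)%:~R = 2 :> rat by [].
rewrite ltr_norml; apply/andP; split; rewrite -(ltr_int rat).
- rewrite rmorphN rmorphB rmorphM /= hN hm h2'. lra.
- rewrite rmorphB rmorphM /= hN hm h2'. lra.
Qed.

Lemma piv_ex n m v : (n <= m)%N -> hv n m v < hnm n m ->
  exists p0, [/\ (p0 <= m)%N, (n%:Z %| T v p0)%Z &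
    `|2 * p0%:Z - m%:Z| < (n + odd (m - n))%:Z].
Proof.
move=> hnm; rewrite hnmE /hv => /bigmin_lt [/rat_to_int h|[p hp /rat_to_int hF]].
  exfalso; move: h; case: odd => /=; lia.
move: hp hF; rewrite /Piv => /mapP [q]; rewrite mem_filter mem_iota => /andP [hdiv hq] -> hF.
have q0 : (0 < q)%N by move: hF; case: (odd _) => /=; case: q {hdiv hq} => //=; lia.
have qm : (q <= m.+1)%N by move: hF hq; case: (odd _) => /=; lia.
exists q.-1; split.
- lia.
- by rewrite /T prednK.
- move: hF; rewrite -subn1 PoszD. lia.
Qed.

Lemma par (p0 m n : nat) : (n <= m)%N ->
  `|2 * p0%:Z - m%:Z| < (n + odd (m - n))%:Z ->
  `|2 * p0%:Z - m%:Z| <= n%:Z - (odd (m - n))%:Z.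
Proof.
move=> hnm; have := odd_double_half (m - n); rewrite -muln2.
case: odd => /=; lia.
Qed.

Lemma u0_nth n m j : (1 <= j <= m)%N -> (u0 n m)`_j = 1.
Proof.
case: j => [|j] // /andP [_ hj]; rewrite /u0 /= nth_cat size_nseq hj nth_nseq hj //.
Qed.

Lemma Tu0 n m p : (p <= m)%N -> T (u0 n m) p = (u0 n m)`_0 + p%:Z.
Proof.
elim: p => [|p IH] hp; first by rewrite T0 addr0.
rewrite TS IH; last by lia.
rewrite (@u0_nth n m p.+1); [lia | lia].
Qed.

Lemma u0_last n m : (u0 n m)`_m.+1 = ((- ((u0 n m)`_0 + m%:Z)) %% n%:Z)%Z.
Proof. by rewrite /u0 /= nth_cat size_nseq ltnn subnn. Qed.

Lemma u0_vertex n m : (0 < n)%N -> is_vertex n m (u0 n m).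
Proof.
move=> hn; split.
- by rewrite /u0 /= size_cat size_nseq addn1.
- exact: mod_range.
- rewrite u0_last; exact: mod_range.
- by move=> i hi; rewrite u0_nth.
- have -> : \sum_(i < m.+2) (u0 n m)`_i = T (u0 n m) m.+1 by [].
  rewrite TS Tu0 // u0_last.
  set a := (u0 n m)`_0; set b := (_ %% _)%Z.
  have := mod_dvd n (- (a + m%:Z)).
  by rewrite -/b (_ : b - - (a + m%:Z) = a + m%:Z + b) //; lia.
Qed.

Lemma Bc m (q : nat) : (q <= m)%N ->
  2 * B m q%:Z = q%:Z * (q%:Z + 1) + (m%:Z - q%:Z) * (m%:Z - q%:Z + 1).
Proof.
elim: m q => [|m IH] q hq.
  have -> : q = 0%N by lia.
  rewrite /B big_ord1 /=; lia.
rewrite /B big_ord_recr /= -/(B m q%:Z).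
case: (leqP q m) => h.
  have := IH q h; nia.
have -> : q = m.+1 by lia.
have := IH m (leqnn m).
have -> : B m m.+1%:Z = B m m%:Z + m.+1%:Z.
  rewrite /B (eq_bigr (fun i : 'I_m.+1 => `|i%:Z - m%:Z| + 1)); last first.
    move=> i _; have := ltn_ord i; lia.
  by rewrite big_split /= sumr_const card_ord natz.
rewrite !subrr !mul0r !addr0 => h0. rewrite mulrDr h0 -[m.+1]addn1 PoszD. lia.
Qed.

Lemma B_mono m (p0 : nat) (q : int) : (p0 <= m)%N ->
  `|2 * p0%:Z - m%:Z| <= `|2 * q - m%:Z| -> B m p0%:Z <= B m q.
Proof.
move=> hp hq.
have hBp := Bc hp.
have hpm : 0 <= p0%:Z * (m%:Z - p0%:Z) by apply: mulr_ge0; lia.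
have sq : (2 * p0%:Z - m%:Z) * (2 * p0%:Z - m%:Z) <= (2 * q - m%:Z) * (2 * q - m%:Z).
  have := ler_pM (normr_ge0 _) (normr_ge0 _) hq hq.
  rewrite -!normrM !ger0_norm //; nia.
case: (ltP q 0) => hq0.
  have hB0 := @Bc m 0 (leq0n m).
  have : B m (Posz 0) <= B m q.
    apply: ler_sum => i _; lia.
  nia.
case: (ltP m%:Z q) => hqm.
  have hBm := @Bc m m (leqnn m).
  have : B m m <= B m q.
    apply: ler_sum => i _; have := ltn_ord i; lia.
  nia.
have [qn eqn] : exists qn : nat, q = qn%:Z by exists `|q|%N; lia.
subst q; have hBq := @Bc m qn (_ : (qn <= m)%N).
nia.
Qed.

Lemma G_u0 n m c : G m (u0 n m) c = B m (c - (u0 n m)`_0).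
Proof.
rewrite /G /B; apply: eq_bigr => i _; rewrite Tu0; last by have := ltn_ord i; lia.
lia.
Qed.

Lemma u0_far n m c : (1 < n)%N -> (n <= m)%N -> (n%:Z %| c)%Z ->
  n%:Z - (odd (m - n))%:Z <= `|2 * (c - (u0 n m)`_0) - m%:Z|.
Proof.
move=> hn hnm Hc.
have ha : (u0 n m)`_0 = ((- ((m - n)./2)%:Z) %% n%:Z)%Z by [].
have := mod_dvd n (- ((m - n)./2)%:Z); rewrite -ha.
case/dvdzP => j hj; case/dvdzP: Hc => k hk.
have := odd_double_half (m - n); rewrite -muln2 => hmn.
have [t ht] : exists t, c - (u0 n m)`_0 = (t * n%:Z) + ((m - n)./2)%:Z.
  exists (k - j); rewrite mulrBl -hk; move: hj; move: ((u0 n m)`_0) (j * n%:Z) => a jn.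
  lia.
rewrite ht.
have [h1|h1] : 1 <= t \/ t <= 0 by lia.
- have : n%:Z <= t * n%:Z by rewrite -[X in X <= _]mul1r ler_pM2r //; lia.
  move: hmn; move: ((m - n)./2) (t * n%:Z) => r tn.
  case: odd => /=; lia.
- have : t * n%:Z <= 0 by rewrite mulr_le0_ge0 //; lia.
  move: hmn; move: ((m - n)./2) (t * n%:Z) => r tn.
  case: odd => /=; lia.
Qed.

Lemma G_lip n m v p0 : is_vertex n m v -> (p0 <= m)%N ->
  G m v (T v p0) <= B m p0%:Z.
Proof.
case=> _ _ _ Hmid _ hp0.
have Hv : forall j, (1 <= j <= m)%N -> -1 <= v`_j <= 1 by move=> j /Hmid; rewrite mem3.
rewrite /G /B; apply: ler_sum => i _.
have hi : (i <= m)%N by have := ltn_ord i; lia.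
case: (leqP p0 i) => h.
- have H : `|T v i - T v p0| <= (i - p0)%:Z by apply: T_lip => // j hj; apply: Hv; lia.
  lia.
- have H : `|T v p0 - T v i| <= (p0 - i)%:Z by apply: T_lip => // [j hj|]; [apply: Hv; lia | exact: ltnW].
  lia.
Qed.

Unset Implicit Arguments.
Set Strict Implicit.

Theorem lemma5p24 (n m : nat) (v : seq int) :
  (1 < n)%N -> (n <= m)%N -> is_vertex n m v -> hv n m v < hnm n m ->
  (dist n m v (zero_vertex m) <= dist n m (u0 n m) (zero_vertex m))%N /\
  (dist n m (u0 n m) (zero_vertex m) <= Dnm n m)%N.
Proof.
move=> hn hnm Hv Hh; split; last first.
  by rewrite /Dnm; case: ifP => _ //; apply: leq_maxl.
have [p0 [hp0 hdiv hpar]] := piv_ex hnm Hh.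
have hpar' := par hnm hpar.
have HG0 : forall w c, 0 <= G m w c.
  by move=> w c; apply: sumr_ge0 => i _; exact: normr_ge0.
have Hdv : (dist n m v (zero_vertex m) <= `|G m v (T v p0)|%N)%N.
  apply: dist_min; apply: (@upper n m hn _ v (T v p0) Hv hdiv).
  have := HG0 v (T v p0); lia.
have Hu := @u0_vertex n m (ltnW hn).
have Hg : G m (u0 n m) 0 = `|G m (u0 n m) 0|%N by have := HG0 (u0 n m) 0; lia.
have Hdu := @upper n m hn _ (u0 n m) 0 Hu (dvdz0 _) Hg.
have Hd := dist_spec Hdu.
have HL : forall c, (n%:Z %| c)%Z -> B m p0%:Z <= G m (u0 n m) c.
  move=> c Hc; rewrite G_u0; apply: B_mono hp0 _.
  have := u0_far hn hnm Hc; lia.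
have := dist_lower Hd HL.
have := G_lip Hv hp0.
have := HG0 v (T v p0).
lia.
Qed.
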